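(* Let $u=s_{i_1}\cdots s_{i_l}$ and $v=s_{j_1}\cdots s_{j_m}$ be reduced words for glides in $\hat S_n$ such that $s_{j_1}\cdots s_{j_m}s_{i_1}\cdots s_{i_l}$ is reduced. In the wiring diagram of $v|u$, write $i\triangleleft j$ if wires $i$ and $j$ cross with $j$ the upper wire of the crossing. Then there exist real numbers $\alpha_1,\dots,\alpha_n$ such that $\alpha_i<\alpha_j$ whenever $i\triangleleft j$.
   Context: $\hat S_n$ is the affine symmetric group with generators $s_0,\dots,s_{n-1}$ (indices mod $n$) and relations $s_i^2=1$, $s_is_js_i=s_js_is_j$ if $i-j\equiv\pm1$, $s_is_j=s_js_i$ if $i-j\not\equiv0,\pm1\pmod n$; $\phi:\hat S_n\to S_n$ sends $s_i\mapsto(i\ i+1)$ ($1\le i\le n-1$), $s_0\mapsto(1\ n)$; a glide of offset $k\in\{0,\dots,n-1\}$ is an element $g$ with $\phi(g)(j)\equiv j+k\pmod n$ for all $j$. A word is drawn as a wiring diagram left to right on a cylinder with $n$ wires in positions $1,\dots,n$ (mod $n$); a letter $s_i$ is a crossing of the wires in positions $i$ and $i+1$ ($s_0$: positions $n$ and $1$). The upper wire of a crossing $s_i$ is the one passing from position $i+1$ to position $i$ (for $s_0$: from position $1$ to position $n$). In the diagram of $v|u$ (the word $vu$ with a cut between $v$ and $u$), wire number $i$ is the wire occupying position $i$ at the cut. *)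

(* Defs.v *)
From Stdlib Require Import Relations Reals.
From mathcomp Require Import all_boot.

Set Implicit Arguments.
Unset Strict Implicit.
Unset Printing Implicit Defensive.

(* Conventions: a generator s_i (0 <= i <= n-1) is the letter i : 'I_n.
   Positions 1..n on the cylinder are encoded by ordinals modulo n:
   position p is the ordinal p %% n (so position n is ordinal 0).
   Then s_i crosses positions i and i+1 (mod n), i.e. ordinals i and ordS i
   (this includes s_0, crossing positions n and 1). *)

Section Affine.
Variable n : nat.

Definition adjacent (a b : 'I_n) : bool := (b == ordS a) || (a == ordS b).

Inductive cox_step : seq 'I_n -> seq 'I_n -> Prop :=
| cs_sq (x y : seq 'I_n) (a : 'I_n) :
    cox_step (x ++ [:: a; a] ++ y) (x ++ y)
| cs_braid (x y : seq 'I_n) (a b : 'I_n) :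
    adjacent a b -> cox_step (x ++ [:: a; b; a] ++ y) (x ++ [:: b; a; b] ++ y)
| cs_comm (x y : seq 'I_n) (a b : 'I_n) :
    a != b -> ~~ adjacent a b -> cox_step (x ++ [:: a; b] ++ y) (x ++ [:: b; a] ++ y).

Definition word_eq : seq 'I_n -> seq 'I_n -> Prop :=
  clos_refl_sym_trans _ cox_step.

Definition reduced (w : seq 'I_n) : Prop :=
  forall w', word_eq w w' -> size w <= size w'.

Definition swp (a : 'I_n) (p : 'I_n) : 'I_n :=
  if p == a then ordS a else if p == ordS a then a else p.

Definition phi (w : seq 'I_n) : 'I_n -> 'I_n :=
  foldr (fun a f => swp a \o f) (fun p => p) w.

Definition is_glide (w : seq 'I_n) : Prop :=
  exists k : 'I_n, forall j : 'I_n, val (phi w j) = (val j + val k) %% n.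

(* state ws p = the wire occupying position p after crossing the letters of ws
   in order, starting from the configuration where the wire at position p is p. *)
Definition wstate (ws : seq 'I_n) : 'I_n -> 'I_n :=
  foldl (fun f a => f \o swp a) (fun p => p) ws.

(* In the wiring diagram of v|u (wire i = wire at position i at the cut):
   tri u v i j  <->  wires i and j cross, j being the upper wire (the one going
   from position a+1 to position a at a crossing s_a). *)
Definition tri (u v : seq 'I_n) (i j : 'I_n) : Prop :=
  (exists (x y : seq 'I_n) (a : 'I_n),
      u = x ++ a :: y /\ wstate x a = i /\ wstate x (ordS a) = j)
  \/
  (exists (x y : seq 'I_n) (a : 'I_n),
      v = x ++ a :: y /\ wstate (rev (a :: y)) a = i
                      /\ wstate (rev (a :: y)) (ordS a) = j).

End Affine.

(* Main.v *)
Require Import Defs.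
From Stdlib Require Import Reals.
From Stdlib Require Import Relations ZArith Lia FunctionalExtensionality.
From mathcomp Require Import all_boot.

Set Implicit Arguments.
Unset Strict Implicit.
Unset Printing Implicit Defensive.

Section Lift.
Variable n : nat.
Hypothesis Hn : (3 <= n)%N.

Local Open Scope Z_scope.

Local Notation NN := (Z.of_nat n).

Lemma HN : 3 <= NN.
Proof. move/leP: Hn; lia. Qed.

Lemma NZ : NN <> 0.
Proof. have := HN; lia. Qed.

Definition ZA (a : 'I_n) : Z := Z.of_nat (nat_of_ord a).

Lemma ZA_range a : 0 <= ZA a < NN.
Proof. unfold ZA. have := ltn_ord a. move/ltP. lia. Qed.

Definition succN (x : Z) := if x + 1 =? NN then 0 else x + 1.

Ltac zdestr := repeat match goal with
  | |- context[(?x =? ?y)] => destruct (Z.eqb_spec x y)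
  | H : context[(?x =? ?y)] |- _ => destruct (Z.eqb_spec x y)
  end.

Lemma ZA_ordS a : ZA (ordS a) = succN (ZA a).
Proof.
have := ZA_range a. unfold ZA, succN => /=.
case: (ltngtP a.+1 n) => h.
- rewrite modn_small //. move/ltP: h. zdestr; lia.
- have := ltn_ord a. move/ltP. move/ltP: h. lia.
- rewrite h modnn. zdestr; lia.
Qed.

Lemma mod_range p : 0 <= p mod NN < NN.
Proof. apply Z.mod_pos_bound. have := HN; lia. Qed.

Lemma modS p : (p + 1) mod NN = succN (p mod NN).
Proof.
rewrite -Z.add_mod_idemp_l; last exact NZ.
have := mod_range p. unfold succN. zdestr => H.
- rewrite e Z.mod_same //; exact NZ.
- rewrite Z.mod_small //; lia.
Qed.

Lemma mod_small' x : 0 <= x < NN -> x mod NN = x.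
Proof. move=> H; by rewrite Z.mod_small. Qed.

Lemma modK p k : (p + k * NN) mod NN = p mod NN.
Proof. apply Z.mod_add. exact NZ. Qed.

Definition sg (a : 'I_n) (p : Z) : Z :=
  if p mod NN =? ZA a then p + 1 else if p mod NN =? succN (ZA a) then p - 1 else p.

Definition dl A r := if r =? A then 1 else if r =? succN A then -1 else 0.
Definition sw A r := if r =? A then succN A else if r =? succN A then A else r.

Lemma sg_dl a p : sg a p = p + dl (ZA a) (p mod NN).
Proof. rewrite /sg /dl. zdestr; lia. Qed.

Lemma modP p : (p - 1) mod NN = if p mod NN =? 0 then NN - 1 else p mod NN - 1.
Proof.
have E : p - 1 = (p mod NN - 1) + (p / NN) * NN.
  have := Z.div_mod p NN NZ. lia.
rewrite E modK. have := mod_range p. zdestr => H.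
- rewrite e. have -> : 0 - 1 = (NN - 1) + (-1) * NN by lia.
  rewrite modK mod_small'; lia.
- rewrite mod_small'; lia.
Qed.

Lemma mod_sg a p : (sg a p) mod NN = sw (ZA a) (p mod NN).
Proof.
rewrite /sg /sw. have := ZA_range a. have := mod_range p.
case: (Z.eqb_spec (p mod NN) (ZA a)) => h1.
- by rewrite modS h1.
case: (Z.eqb_spec (p mod NN) (succN (ZA a))) => h2 //.
rewrite modP h2. move: h2. rewrite /succN. zdestr; lia.
Qed.


Ltac rsolve := rewrite /dl /sw /succN; zdestr; lia.

Lemma res_inv A r : 0 <= A < NN -> 0 <= r < NN -> dl A r + dl A (sw A r) = 0.
Proof. have := HN. rsolve. Qed.

Lemma res_comm A B r : 0 <= A < NN -> 0 <= B < NN -> 0 <= r < NN ->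
  A <> B -> B <> succN A -> A <> succN B ->
  dl B r + dl A (sw B r) = dl A r + dl B (sw A r) /\ sw A (sw B r) = sw B (sw A r).
Proof. have := HN. rewrite /dl /sw /succN. zdestr; lia. Qed.

Lemma res_braid A r : 0 <= A < NN -> 0 <= r < NN ->
  let B := succN A in
  dl A r + dl B (sw A r) + dl A (sw B (sw A r)) =
  dl B r + dl A (sw B r) + dl B (sw A (sw B r)).
Proof. move=> ? ? /=. have := HN. rsolve. Qed.


Lemma sg_inv a p : sg a (sg a p) = p.
Proof.
rewrite (sg_dl a (sg a p)) mod_sg sg_dl.
have := res_inv (ZA_range a) (mod_range p). lia.
Qed.

Lemma sg_inj a p q : sg a p = sg a q -> p = q.
Proof. move=> h. by rewrite -(sg_inv a p) h sg_inv. Qed.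

Lemma sg_per a p k : sg a (p + k * NN) = sg a p + k * NN.
Proof. rewrite !sg_dl modK. lia. Qed.

Lemma sg_at a p : p mod NN = ZA a -> sg a p = p + 1 /\ sg a (p + 1) = p.
Proof.
move=> h. rewrite !sg_dl modS h /dl. have := ZA_range a. have := HN.
rewrite /succN. zdestr; lia.
Qed.

Lemma sg_fix a p : p mod NN <> ZA a -> p mod NN <> succN (ZA a) -> sg a p = p.
Proof. move=> h1 h2. rewrite sg_dl /dl. zdestr; lia. Qed.

Lemma modSS p : (p + 1 + 1) mod NN = succN (succN (p mod NN)).
Proof. by rewrite !modS. Qed.

Lemma sg_mono a p q : p < q -> sg a p < sg a q \/ (p mod NN = ZA a /\ q = p + 1).
Proof.
move=> lt. rewrite !sg_dl.
have Hp := mod_range p. have HA := ZA_range a. have := HN.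
case: (Z.lt_ge_cases (p + 2) q) => h.
  rewrite /dl. zdestr; lia.
have [->|->] : q = p + 1 \/ q = p + 1 + 1 by lia.
- rewrite modS. rewrite /dl /succN. zdestr; lia.
- rewrite modSS. rewrite /dl /succN. zdestr; lia.
Qed.

Lemma ZA_inj a b : ZA a = ZA b -> a = b.
Proof. rewrite /ZA => h. apply/val_inj => /=. lia. Qed.

Lemma sg_comm a b p : a != b -> ~~ adjacent a b -> sg a (sg b p) = sg b (sg a p).
Proof.
move=> nab; rewrite /adjacent negb_or => /andP [h1 h2].
have e1 : ZA a <> ZA b by move=> e; move: nab; rewrite (ZA_inj e) eqxx.
have e2 : ZA b <> succN (ZA a) by move=> e; move: h1; rewrite -ZA_ordS in e; rewrite (ZA_inj e) eqxx.
have e3 : ZA a <> succN (ZA b) by move=> e; move: h2; rewrite -ZA_ordS in e; rewrite (ZA_inj e) eqxx.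
have [r1 r2] := res_comm (ZA_range a) (ZA_range b) (mod_range p) e1 e2 e3.
rewrite (sg_dl a (sg b p)) (sg_dl b (sg a p)) !mod_sg !sg_dl. lia.
Qed.

Lemma sg_braid1 a p :
  let b := ordS a in sg a (sg b (sg a p)) = sg b (sg a (sg b p)).
Proof.
move=> b.
have := res_braid (ZA_range a) (mod_range p). rewrite /= -ZA_ordS -/b.
rewrite (sg_dl a (sg b (sg a p))) (sg_dl b (sg a (sg b p))) !mod_sg.
rewrite (sg_dl b (sg a p)) (sg_dl a (sg b p)) !mod_sg !sg_dl. lia.
Qed.

Lemma sg_braid a b p : adjacent a b -> sg a (sg b (sg a p)) = sg b (sg a (sg b p)).
Proof.
case/orP => /eqP ->; first exact: sg_braid1.
by rewrite sg_braid1.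
Qed.


Definition cfg (w : seq 'I_n) : Z -> Z :=
  foldl (fun f a => fun p => f (sg a p)) (fun p => p) w.

Lemma cfg_foldl w (g : Z -> Z) (p : Z) :
  foldl (fun f a => fun p => f (sg a p)) g w p = g (cfg w p).
Proof.
elim: w g => [|a w IH] g //=.
rewrite IH /cfg /=. by rewrite (IH (fun p => sg a p)).
Qed.

Lemma cfg_cons a w p : cfg (a :: w) p = sg a (cfg w p).
Proof. by rewrite /cfg /= cfg_foldl. Qed.

Lemma cfg_nil p : cfg [::] p = p.
Proof. by []. Qed.

Lemma cfg_cat w1 w2 p : cfg (w1 ++ w2) p = cfg w1 (cfg w2 p).
Proof. elim: w1 => [|a w IH] //=. by rewrite !cfg_cons IH. Qed.

Lemma cfg_rcons w a p : cfg (rcons w a) p = cfg w (sg a p).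
Proof. by rewrite -cats1 cfg_cat cfg_cons cfg_nil. Qed.

Lemma cfg_per w p k : cfg w (p + k * NN) = cfg w p + k * NN.
Proof. elim: w => [|a w IH] //=. by rewrite !cfg_cons IH sg_per. Qed.

Lemma cfg_revK w p : cfg (rev w) (cfg w p) = p.
Proof.
elim: w p => [|a w IH] p //=.
by rewrite rev_cons cfg_rcons cfg_cons sg_inv IH.
Qed.

Lemma cfg_Krev w p : cfg w (cfg (rev w) p) = p.
Proof. by rewrite -{1}(revK w) cfg_revK. Qed.

Lemma cfg_inj w p q : cfg w p = cfg w q -> p = q.
Proof. move=> h. by rewrite -(cfg_revK w p) h cfg_revK. Qed.

Lemma cfg_step w w' : cox_step w w' -> forall p, cfg w p = cfg w' p.
Proof.
case=> [x y a|x y a b H|x y a b H1 H2] p; rewrite !cfg_cat !cfg_cons.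
- by rewrite sg_inv.
- by rewrite ?cfg_cons sg_braid.
- by rewrite ?cfg_cons sg_comm.
Qed.

Lemma cfg_weq w w' : word_eq w w' -> forall p, cfg w p = cfg w' p.
Proof.
elim=> [x y /cfg_step //|//|x y _ IH p|x y z _ IH1 _ IH2 p].
- by rewrite IH.
- by rewrite IH1 IH2.
Qed.

Lemma step_ctx (x y w w' : seq 'I_n) : cox_step w w' -> cox_step (x ++ w ++ y) (x ++ w' ++ y).
Proof.
case=> [x0 y0 a|x0 y0 a b H|x0 y0 a b H1 H2].
- have := cs_sq (x ++ x0) (y0 ++ y) a. by rewrite -!catA.
- have := cs_braid (x ++ x0) (y0 ++ y) H. by rewrite -!catA.
- have := cs_comm (x ++ x0) (y0 ++ y) H1 H2. by rewrite -!catA.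
Qed.

Lemma weq_ctx (x y w w' : seq 'I_n) : word_eq w w' -> word_eq (x ++ w ++ y) (x ++ w' ++ y).
Proof.
elim=> [a b /(step_ctx x y) H|a|a b _ IH|a b c _ IH1 _ IH2].
- exact: rst_step.
- exact: rst_refl.
- exact: rst_sym.
- exact: rst_trans IH1 IH2.
Qed.

Lemma weq_trans (a b c : seq 'I_n) : word_eq a b -> word_eq b c -> word_eq a c.
Proof. exact: rst_trans. Qed.

Lemma weq_rcons (w w' : seq 'I_n) a : word_eq w w' -> word_eq (rcons w a) (rcons w' a).
Proof. move=> h. rewrite -!cats1. have := weq_ctx [::] [:: a] h. by rewrite /= . Qed.


Lemma succN_range x : 0 <= x < NN -> 0 <= succN x < NN.
Proof. have := HN. rewrite /succN; zdestr; lia. Qed.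
Lemma succN_inj x y : 0 <= x < NN -> 0 <= y < NN -> succN x = succN y -> x = y.
Proof. have := HN. rewrite /succN; zdestr; lia. Qed.
Lemma succN_ne x : 0 <= x < NN -> succN x <> x.
Proof. have := HN. rewrite /succN; zdestr; lia. Qed.
Lemma succN_ne2 x : 0 <= x < NN -> succN (succN x) <> x.
Proof. have := HN. rewrite /succN; zdestr; lia. Qed.

Lemma toO_subproof P : (Z.to_nat (P mod NN) < n)%N.
Proof. apply/ltP. have := mod_range P. lia. Qed.

Definition toO P : 'I_n := Ordinal (toO_subproof P).

Lemma ZA_toO P : ZA (toO P) = P mod NN.
Proof. rewrite /ZA /=. have := mod_range P. lia. Qed.

Lemma toO_eq P a : P mod NN = ZA a -> toO P = a.
Proof. move=> h. apply: ZA_inj. by rewrite ZA_toO. Qed.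

Lemma lift_eq x p : x mod NN = p mod NN -> x = p + (x / NN - p / NN) * NN.
Proof.
have := Z.div_mod x NN NZ. have := Z.div_mod p NN NZ. nia.
Qed.

Lemma check_at w p : cfg w p < cfg w (p + 1) ->
  forall x, x mod NN = p mod NN -> cfg w x < cfg w (x + 1).
Proof.
move=> h x /lift_eq ->.
have -> : p + (x / NN - p / NN) * NN + 1 = (p + 1) + (x / NN - p / NN) * NN by lia.
rewrite !cfg_per. lia.
Qed.

Fixpoint ndc (c : Z -> Z) (w : seq 'I_n) : Prop :=
  match w with
  | [::] => True
  | a :: w' => (forall p, p mod NN = ZA a -> c p < c (p + 1)) /\
               ndc (fun p => c (sg a p)) w'
  end.

Lemma ndc_ext w c c' : (forall p, c p = c' p) -> ndc c w -> ndc c' w.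
Proof.
elim: w c c' => [|a w IH] c c' //= E [h1 h2]. split.
- move=> p hp. rewrite -!E. exact: h1.
- apply: (IH _ _ _ h2) => p. by rewrite E.
Qed.

Lemma ndc_cat c w1 w2 :
  ndc c (w1 ++ w2) <-> ndc c w1 /\ ndc (fun p => c (cfg w1 p)) w2.
Proof.
elim: w1 c => [|a w1 IH] c /=; first by tauto.
rewrite IH. split.
- move=> [h1 [h2 h3]]. split => //. apply: ndc_ext h3 => p. by rewrite cfg_cons.
- move=> [[h1 h2] h3]. split => //. split => //. apply: ndc_ext h3 => p. by rewrite cfg_cons.
Qed.

Lemma ndc_rcons c w a : ndc c (rcons w a) <->
  ndc c w /\ (forall p, p mod NN = ZA a -> c (cfg w p) < c (cfg w (p + 1))).
Proof.
rewrite -cats1 ndc_cat /=. split.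
- by move=> [h1 [h2 _]].
- by move=> [h1 h2].
Qed.

Lemma persist w c p q : ndc c w -> p < q -> c q < c p ->
  cfg (rev w) p < cfg (rev w) q.
Proof.
elim: w c p q => [|a w IH] c p q //= [h1 h2] lt inv.
rewrite rev_cons !cfg_rcons.
apply: (IH _ _ _ h2).
- case: (sg_mono a lt) => // [[hp hq]]. subst q. have := h1 p hp. lia.
- by rewrite !sg_inv.
Qed.


Lemma rcons3 (Q : seq 'I_n) a b c :
  rcons (rcons (rcons Q a) b) c = Q ++ [:: a; b; c] ++ [::].
Proof. by rewrite -!cats1 -!catA. Qed.

Lemma rcons2 (Q : seq 'I_n) a b : rcons (rcons Q a) b = Q ++ [:: a; b] ++ [::].
Proof. by rewrite -!cats1 -!catA. Qed.

Lemma weq_refl (w : seq 'I_n) : word_eq w w.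
Proof. exact: rst_refl. Qed.

Lemma weq_step (w w' : seq 'I_n) : cox_step w w' -> word_eq w w'.
Proof. exact: rst_step. Qed.

Lemma cfg_weq_rcons P Q d x : word_eq P (rcons Q d) -> cfg Q x = cfg P (sg d x).
Proof. move=> h. by rewrite (cfg_weq h) cfg_rcons sg_inv. Qed.

Lemma mod_pred p : (p - 1) mod NN = p mod NN - 1 \/ (p mod NN = 0 /\ (p - 1) mod NN = NN - 1).
Proof. rewrite modP. zdestr; lia. Qed.

Lemma keyK m : forall P : seq 'I_n, (size P <= m)%N -> ndc (fun x => x) P ->
  forall p, cfg P (p + 1) < cfg P p ->
  exists Q, word_eq P (rcons Q (toO p)) /\ ndc (fun x => x) Q /\ (size Q).+1 = size P.
Proof.
elim: m => [|m IH] P.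
  rewrite leqn0 => /nilP -> _ p. rewrite !cfg_nil. lia.
case/lastP: P => [|P' e]; first by move=> _ _ p; rewrite !cfg_nil; lia.
rewrite size_rcons ltnS => hs /ndc_rcons [nP' ce] p hp.
rewrite !cfg_rcons in hp.
have Hr := mod_range p. have HA := ZA_range e.
have S1 := modS p. have S2 := modSS p.
have R1 := succN_range Hr. have R2 := succN_range R1. have RA := succN_range HA.
have N1 := succN_ne Hr. have N2 := succN_ne2 Hr. have NA1 := succN_ne HA. have NA2 := succN_ne2 HA.
case: (Z.eq_dec (p mod NN) (ZA e)) => [h1|h1].
  exists P'. rewrite (toO_eq h1). split; [exact: weq_refl| split => //].
case: (Z.eq_dec (ZA e) (succN (p mod NN))) => [h2|h2].
  have spe : sg e p = p by apply: sg_fix => // h; rewrite h2 in h; exact: N2 (esym h).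
  have [s1 s2] : sg e (p + 1) = p + 1 + 1 /\ sg e (p + 1 + 1) = p + 1 by apply: sg_at; lia.
  rewrite spe s1 in hp.
  have ce1 : cfg P' (p + 1) < cfg P' (p + 1 + 1) by apply: ce; lia.
  have [Q1 [w1 [nQ1 sz1]]] : exists Q, word_eq P' (rcons Q (toO p)) /\ ndc id Q /\ (size Q).+1 = size P'.
    apply: IH => //. lia.
  set d := toO p in w1.
  have Zd : ZA d = p mod NN by rewrite ZA_toO.
  have [t1 t2] : sg d p = p + 1 /\ sg d (p + 1) = p by apply: sg_at; lia.
  have t3 : sg d (p + 1 + 1) = p + 1 + 1.
    apply: sg_fix; rewrite S2 Zd => h; [exact: N2 h|]. exact: N1 (succN_inj R1 Hr h).
  have c1 x := cfg_weq_rcons x w1.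
  have hsQ1 : (size Q1 <= m)%N by apply: ltnW; rewrite sz1.
  have [Q2 [w2 [nQ2 sz2]]] : exists Q, word_eq Q1 (rcons Q (toO (p + 1))) /\ ndc id Q /\ (size Q).+1 = size Q1.
    apply: IH => //. rewrite !c1 t2 t3. lia.
  have Ee : toO (p + 1) = e by apply: toO_eq; lia.
  rewrite Ee in w2.
  have c2 x := cfg_weq_rcons x w2.
  exists (rcons (rcons Q2 d) e). split; last split.
  - apply: weq_trans (weq_rcons e w1) _.
    apply: weq_trans (weq_rcons e (weq_rcons d w2)) _.
    rewrite -/d !rcons3. apply: weq_step. apply: cs_braid.
    apply/orP; right. apply/eqP/ZA_inj. by rewrite ZA_ordS Zd.
  - apply/ndc_rcons; split; first (apply/ndc_rcons; split => //).
    + move=> x hx /=. apply: (check_at (p := p)); last by rewrite hx Zd.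
      rewrite !c2 spe s1 !c1 t1 t3. lia.
    + move=> x hx /=. apply: (check_at (p := p + 1)); last by rewrite hx S1 h2.
      rewrite !cfg_rcons t2 t3 !c2 spe s2 !c1 t1 t2. lia.
  - by rewrite !size_rcons -sz1 -sz2.
case: (Z.eq_dec (p mod NN) (succN (ZA e))) => [h3|h3].
  have Ep : (p - 1) mod NN = ZA e.
    have := modS (p - 1). rewrite Z.sub_add h3 => h.
    exact: succN_inj (mod_range _) HA (esym h).
  have [s1 s2] : sg e (p - 1) = p - 1 + 1 /\ sg e (p - 1 + 1) = p - 1 by apply: sg_at.
  rewrite Z.sub_add in s1 s2.
  have s3 : sg e (p + 1) = p + 1.
    apply: sg_fix; rewrite S1 h3 => h; [exact: NA2 h|]. exact: NA1 (succN_inj RA HA h).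
  rewrite s2 s3 in hp.
  have ce0 : cfg P' (p - 1) < cfg P' p by have := ce (p - 1) Ep; rewrite Z.sub_add.
  have [Q1 [w1 [nQ1 sz1]]] : exists Q, word_eq P' (rcons Q (toO p)) /\ ndc id Q /\ (size Q).+1 = size P'.
    apply: IH => //. lia.
  set d := toO p in w1.
  have Zd : ZA d = p mod NN by rewrite ZA_toO.
  have [t1 t2] : sg d p = p + 1 /\ sg d (p + 1) = p by apply: sg_at; lia.
  have t0 : sg d (p - 1) = p - 1.
    apply: sg_fix; rewrite Ep Zd h3 => h; [exact: NA1 (esym h)|]. exact: NA2 (esym h).
  have c1 x := cfg_weq_rcons x w1.
  have hsQ1 : (size Q1 <= m)%N by apply: ltnW; rewrite sz1.
  have [Q2 [w2 [nQ2 sz2]]] : exists Q, word_eq Q1 (rcons Q (toO (p - 1))) /\ ndc id Q /\ (size Q).+1 = size Q1.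
    apply: IH => //. rewrite Z.sub_add !c1 t1 t0. lia.
  rewrite (toO_eq Ep) in w2.
  have c2 x := cfg_weq_rcons x w2.
  exists (rcons (rcons Q2 d) e). split; last split.
  - apply: weq_trans (weq_rcons e w1) _.
    apply: weq_trans (weq_rcons e (weq_rcons d w2)) _.
    rewrite -/d !rcons3. apply: weq_step. apply: cs_braid.
    apply/orP; left. apply/eqP/ZA_inj. by rewrite ZA_ordS Zd h3.
  - apply/ndc_rcons; split; first (apply/ndc_rcons; split => //).
    + move=> x hx /=. apply: (check_at (p := p)); last by rewrite hx Zd.
      rewrite !c2 s2 s3 !c1 t0 t2. lia.
    + move=> x hx /=. apply: (check_at (p := p - 1)); last by rewrite hx Ep.
      rewrite Z.sub_add !cfg_rcons t0 t1 !c2 s1 s3 !c1 t1 t2. lia.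
  - by rewrite !size_rcons -sz1 -sz2.
have s0 : sg e p = p by apply: sg_fix.
have s1 : sg e (p + 1) = p + 1.
  apply: sg_fix; rewrite S1 => h; [exact: h2 (esym h)|]. exact: h1 (succN_inj Hr HA h).
rewrite s0 s1 in hp.
have [Q1 [w1 [nQ1 sz1]]] : exists Q, word_eq P' (rcons Q (toO p)) /\ ndc id Q /\ (size Q).+1 = size P'.
  by apply: IH.
set d := toO p in w1.
have Zd : ZA d = p mod NN by rewrite ZA_toO.
have c1 x := cfg_weq_rcons x w1.
exists (rcons Q1 e). split; last split.
- apply: weq_trans (weq_rcons e w1) _.
  rewrite -/d !rcons2. apply: weq_step. apply: cs_comm.
  + apply/eqP => E. apply: h1. by rewrite -Zd E.
  + rewrite /adjacent negb_or. apply/andP; split; apply/eqP => E.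
    * apply: h2. by rewrite E ZA_ordS Zd.
    * apply: h3. by rewrite -Zd E ZA_ordS.
- apply/ndc_rcons; split => //. move=> x hx /=. rewrite !c1.
  have Hx := modS x.
  have -> : sg d x = x by apply: sg_fix; rewrite hx Zd => h; [exact: h1 (esym h)| exact: h2 h].
  have -> : sg d (x + 1) = x + 1.
    apply: sg_fix; rewrite Hx hx Zd => h; [exact: h3 (esym h)|]. exact: h1 (succN_inj Hr HA (esym h)).
  exact: ce.
- by rewrite !size_rcons sz1.
Qed.


Lemma reduced_prefix (w : seq 'I_n) a : reduced (rcons w a) -> reduced w.
Proof.
move=> h w' e. have := h (rcons w' a) (weq_rcons a e). by rewrite !size_rcons ltnS.
Qed.

Lemma reduced_ndc (w : seq 'I_n) : reduced w -> ndc id w.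
Proof.
elim/last_ind: w => [|w a IH] //= hr.
have nw := IH (reduced_prefix hr).
apply/ndc_rcons; split => // x hx /=.
case: (Z_lt_le_dec (cfg w x) (cfg w (x + 1))) => // hle. exfalso.
have hlt : cfg w (x + 1) < cfg w x.
  case: (Z.eq_dec (cfg w x) (cfg w (x + 1))) => [E|]; last lia.
  have := cfg_inj E. lia.
have [Q [wq [_ sz]]] := keyK (leqnn (size w)) nw hlt.
rewrite (toO_eq hx) in wq.
have W : word_eq (rcons w a) (Q ++ [::] ++ [::]).
  apply: weq_trans (weq_rcons a wq) _. rewrite -!cats1 -catA /=.
  exact: weq_step (cs_sq Q [::] a).
have := hr _ W. rewrite size_rcons !cats0 -sz. by move/ltnW; rewrite ltnn.
Qed.

Lemma wst_foldl (w : seq 'I_n) (g : 'I_n -> 'I_n) q :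
  foldl (fun f a => f \o swp a) g w q = g (wstate w q).
Proof.
elim: w g => [|a w IH] g //=.
rewrite IH /wstate /=. by rewrite (IH (swp a)).
Qed.

Lemma wstate_cons (a : 'I_n) w q : wstate (a :: w) q = swp a (wstate w q).
Proof. by rewrite /wstate /= wst_foldl. Qed.

Lemma phi_wstate (w : seq 'I_n) q : phi w q = wstate w q.
Proof. elim: w => [|a w IH] //=. by rewrite wstate_cons -IH. Qed.

Lemma swp_sg a q P : P mod NN = ZA q -> ZA (swp a q) = (sg a P) mod NN.
Proof.
move=> hP. rewrite mod_sg hP /swp /sw.
have HA := ZA_range a. have NA1 := succN_ne HA.
case: (q =P a) => [->|n1]; first by rewrite Z.eqb_refl ZA_ordS.
have n1' : ZA q <> ZA a by move/ZA_inj.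
case: (q =P ordS a) => [->|n2].
  rewrite ZA_ordS. zdestr; lia.
have n2' : ZA q <> succN (ZA a) by rewrite -ZA_ordS => /ZA_inj.
zdestr; lia.
Qed.

Lemma wstate_cfg (w : seq 'I_n) q P : P mod NN = ZA q -> ZA (wstate w q) = cfg w P mod NN.
Proof.
elim: w => [|a w IH] //= hP.
rewrite wstate_cons cfg_cons. apply: swp_sg. by rewrite IH.
Qed.

Lemma glide_cfg (w : seq 'I_n) : is_glide w -> exists K, forall P, exists t, cfg w P - P = K + t * NN.
Proof.
move=> [k hk]. exists (ZA k) => P.
set j := toO P.
have E1 : ZA (phi w j) = cfg w P mod NN.
  rewrite phi_wstate. apply: wstate_cfg. by rewrite ZA_toO.
have E2 : (P + ZA k) mod NN = ZA (phi w j).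
  rewrite /ZA hk.
  have := divn_eq (j + k) n. have := ltn_mod (j + k) n.
  have -> : (0 < n)%N by apply: leq_trans Hn.
  move=> /ltP lt E.
  have EZ : Z.of_nat (j + k) = Z.of_nat ((j + k) %% n) + Z.of_nat ((j + k) %/ n) * NN.
    rewrite {1}E addnE mulnE. lia.
  have EP : P + Z.of_nat k = Z.of_nat (j + k) + (P / NN) * NN.
    have := Z.div_mod P NN NZ. have := ZA_toO P. rewrite /ZA -/j addnE. lia.
  rewrite EP modK EZ modK mod_small' //. lia.
have := lift_eq (x := cfg w P) (p := P + ZA k). rewrite -E1 E2 => /(_ erefl) ->.
exists (cfg w P / NN - (P + ZA k) / NN). lia.
Qed.


Lemma multN_le a b K t1 t2 : a = K + t1 * NN -> b = K + t2 * NN -> a < b + NN -> a <= b.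
Proof.
move=> -> -> h. have := HN => hN.
case: (Z_lt_le_dec t2 t1) => ht.
  have : 1 * NN <= (t1 - t2) * NN by apply: Z.mul_le_mono_nonneg_r; lia.
  rewrite Z.mul_sub_distr_r. lia.
have : t1 * NN <= t2 * NN by apply: Z.mul_le_mono_nonneg_r; lia.
lia.
Qed.

Lemma main (u v : seq 'I_n) :
  reduced u -> is_glide u ->
  reduced v -> is_glide v ->
  reduced (v ++ u) ->
  exists alpha : 'I_n -> R,
    forall i j : 'I_n, tri u v i j -> Rlt (alpha i) (alpha j).
Proof.
move=> ru gu rv gv rvu.
have nu := reduced_ndc ru. have nv := reduced_ndc rv.
have nvu : ndc (fun p => cfg v p) u by have [_ h] := (ndc_cat _ _ _).1 (reduced_ndc rvu).
have [Kv GV] := glide_cfg gv.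
have [Ku GU] := glide_cfg gu.
set F := cfg (rev u).
have GF : forall P, exists t, F P - P = - Ku + t * NN.
  move=> P. have [t Ht] := GU (F P). rewrite /F cfg_Krev in Ht. exists (- t). rewrite Z.mul_opp_l /F. lia.
set h := fun P => cfg v P - F P.
have hper : forall P k, h (P + k * NN) = h P.
  move=> P k. rewrite /h /F !cfg_per. lia.
have hlift : forall I (i : 'I_n), I mod NN = ZA i -> h I = h (ZA i).
  move=> I i hI. rewrite (lift_eq (x := I) (p := ZA i)); first by rewrite hper.
  by rewrite hI mod_small' //; apply: ZA_range.
exists (fun i => IZR (h (ZA i))) => i j [[x [y [a [Eu [Ei Ej]]]]]|[x [y [a [Ev [Ei Ej]]]]]];
  apply: IZR_lt.
-
  set Aa := ZA a.
  have HA : 0 <= Aa < NN by apply: ZA_range.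
  have mA : Aa mod NN = Aa by rewrite mod_small'.
  have mA1 : (Aa + 1) mod NN = ZA (ordS a) by rewrite modS mA ZA_ordS.
  have [sa1 sa2] : sg a Aa = Aa + 1 /\ sg a (Aa + 1) = Aa by apply: sg_at.
  set I := cfg x Aa. set J := cfg x (Aa + 1).
  have Ii : I mod NN = ZA i by rewrite -Ei (wstate_cfg _ mA).
  have Jj : J mod NN = ZA j by rewrite -Ej (wstate_cfg _ mA1).
  rewrite Eu -cat_rcons in nu.
  have [nxa ny] := (ndc_cat _ _ _).1 nu.
  have [_ ca] := (ndc_rcons _ _ _).1 nxa.
  have IJ : I < J by have := ca Aa mA.
  have py := persist (p := Aa) (q := Aa + 1) ny (ltac:(lia)).
  rewrite /= !cfg_rcons sa1 sa2 -/I -/J in py.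
  have {py} py := py IJ.
  have FE : forall P, F P = cfg (rev y) (sg a (cfg (rev x) P)).
    move=> P. by rewrite /F Eu -cat_rcons rev_cat rev_rcons cfg_cat cfg_cons.
  have FJI : F J < F I by rewrite !FE /I /J !cfg_revK sa1 sa2.
  set k := (J - I) / NN. set r0 := (J - I) mod NN.
  have Hk : 0 <= k by apply: Z.div_pos; have := HN; lia.
  have Er : J - I = NN * k + r0 by apply: Z.div_mod; exact: NZ.
  have Hr0 := mod_range (J - I). rewrite -/r0 in Hr0.
  set J' := I + r0.
  have EJ' : J' = J + (- k) * NN by rewrite /J'; lia.
  have FJ' : F J' = F J + (- k) * NN by rewrite EJ' /F cfg_per.
  have r0pos : 0 < r0.
    case: (Z.eq_dec r0 0) => [e0|]; last lia.
    have EJ : J = I + k * NN by lia.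
    have : F J = F I + k * NN by rewrite EJ /F cfg_per.
    have := HN. nia.
  have FJ'I : F J' < F I by have := HN; nia.
  have BIJ : cfg v I < cfg v J'.
    case: (Z_lt_le_dec (cfg v I) (cfg v J')) => // hle.
    case: (Z.eq_dec (cfg v I) (cfg v J')) => [E|ne].
      have := cfg_inj E. lia.
    have IJ' : I < J' by rewrite /J'; lia.
    have BJI : cfg v J' < cfg v I by lia.
    have := persist nvu IJ' BJI.
    rewrite -/F. lia.
  have [tI HtI] := GV I. have [tJ HtJ] := GV J'.
  have Le : cfg v I - I <= cfg v J' - J'.
    apply: (multN_le HtI HtJ). lia.
  rewrite -(hlift _ _ Ii) -(hlift _ _ Jj).
  have -> : h J = h J' by rewrite EJ' hper.
  rewrite /h. lia.
-
  set Aa := ZA a.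
  have HA : 0 <= Aa < NN by apply: ZA_range.
  have mA : Aa mod NN = Aa by rewrite mod_small'.
  have mA1 : (Aa + 1) mod NN = ZA (ordS a) by rewrite modS mA ZA_ordS.
  have [sa1 sa2] : sg a Aa = Aa + 1 /\ sg a (Aa + 1) = Aa by apply: sg_at.
  have Ii : cfg (rev y) (Aa + 1) mod NN = ZA i.
    by rewrite -Ei (wstate_cfg _ mA) rev_cons cfg_rcons sa1.
  have Jj : cfg (rev y) Aa mod NN = ZA j.
    by rewrite -Ej (wstate_cfg _ mA1) rev_cons cfg_rcons sa2.
  move: Ii Jj. set I := cfg (rev y) (Aa + 1). set J := cfg (rev y) Aa. move=> Ii Jj.
  have nv' := nv. rewrite Ev -cat_rcons in nv'.
  have [nxa ny] := (ndc_cat _ _ _).1 nv'.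
  have [_ ca] := (ndc_rcons _ _ _).1 nxa.
  have cxa := ca Aa mA.
  have lA : Aa < Aa + 1 by lia.
  have py := persist ny lA.
  rewrite /= !cfg_rcons sa1 sa2 -/I -/J in py.
  have JI : J < I by apply: py; lia.
  have BE : forall P, cfg v P = cfg x (sg a (cfg y P)).
    move=> P. by rewrite Ev cfg_cat cfg_cons.
  have BJ : cfg v J = cfg x (Aa + 1) by rewrite BE /J cfg_Krev sa1.
  have BI : cfg v I = cfg x Aa by rewrite BE /I cfg_Krev sa2.
  set k := (I - J) / NN. set r0 := (I - J) mod NN.
  have Hk : 0 <= k by apply: Z.div_pos; have := HN; lia.
  have Er : I - J = NN * k + r0 by apply: Z.div_mod; exact: NZ.
  have Hr0 := mod_range (I - J). rewrite -/r0 in Hr0.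
  set I' := J + r0.
  have EI'0 : I' = J + r0 by [].
  have EI' : I' = I + (- k) * NN by rewrite /I'; lia.
  have BI' : cfg v I' = cfg v I + (- k) * NN by rewrite EI' cfg_per.
  have r0pos : 0 < r0.
    case: (Z.eq_dec r0 0) => [e0|]; last lia.
    have EI : I = J + k * NN by lia.
    have : cfg v I = cfg v J + k * NN by rewrite EI cfg_per.
    have := HN. nia.
  have BI'J : cfg v I' < cfg v J by have := HN; nia.
  have JI' : J < I' by lia.
  have pu := persist nvu JI' BI'J. rewrite -/F in pu.
  have [tJ HtJ] := GF J. have [tI HtI] := GF I'.
  have Le : F J - J <= F I' - I'.
    apply: (multN_le HtJ HtI). lia.
  rewrite -(hlift _ _ Ii) -(hlift _ _ Jj).
  have -> : h I = h I' by rewrite EI' hper.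
  rewrite /h. lia.
Qed.

End Lift.

Theorem lemma4p3 (n : nat) (Hn : 3 <= n) (u v : seq 'I_n) :
  reduced u -> is_glide u ->
  reduced v -> is_glide v ->
  reduced (v ++ u) ->
  exists alpha : 'I_n -> R,
    forall i j : 'I_n, tri u v i j -> Rlt (alpha i) (alpha j).
Proof. exact (@main n Hn u v). Qed.
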